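(* Let $c\ge1$ and $\gamma\in(0,1/2]$. There is a constant $C=C(c,\gamma)$ such that the following holds. Let $\theta_1\ge\dots\ge\theta_n$ be $c$-spread, let $K=\gamma n$ be an integer with $K\ge1$, and let $\epsilon$ satisfy $\frac{4c}{\gamma n^2}\le\epsilon\le1$. Then $H^{(t,\epsilon)}\le C\,\frac{n}{\sqrt\epsilon}$ where $t=t(\epsilon,K)$. Moreover, for every $c$-spread instance with $n\ge2$, every $1\le K\le n-1$ and every $\epsilon$ with $\frac cn\le\epsilon\le1$, we have $H^{(0,\epsilon)}=\sum_{i=1}^n\min\{\Delta_i^{-2},\epsilon^{-2}\}\ge\frac{n}{4c\epsilon}$.
   Context: Means $\theta_1\ge\dots\ge\theta_n$ in $[0,1]$ are called $c$-spread (for $c\ge1$) if $|\theta_i-\theta_j|\in\left[\frac{|i-j|}{cn},\frac{c|i-j|}{n}\right]$ for all $i,j\in[n]$. Gaps: $\Delta_i=\theta_i-\theta_{K+1}$ for $i\le K$, $\Delta_i=\theta_K-\theta_i$ for $i\ge K+1$. $t(\epsilon,K)$ is the largest $t\in\{0,\dots,K-1\}$ with $\Delta_{K-t}\cdot t\le K\epsilon$ and $\Delta_{K+t+1}\cdot t\le K\epsilon$. $\Psi_t=\min(\Delta_{K-t},\Delta_{K+t+1})$, $\Psi_t^{\epsilon}=\max(\epsilon,\Psi_t)$, and $H^{(t,\epsilon)}=\sum_{i=1}^n\min\{\Delta_i^{-2},(\Psi_t^\epsilon)^{-2}\}$. *)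

(* Defs.v *)
(* classical reals. Means are indexed 1..n via theta : nat -> R. *)
From Stdlib Require Import Reals Lra Lia.
Open Scope R_scope.
Local Open Scope bool_scope.

Definition spread (c : R) (n : nat) (theta : nat -> R) : Prop :=
  (forall i j, (1 <= i)%nat -> (i <= j)%nat -> (j <= n)%nat -> theta j <= theta i) /\
  (forall i, (1 <= i)%nat -> (i <= n)%nat -> 0 <= theta i <= 1) /\
  (forall i j, (1 <= i)%nat -> (i <= n)%nat -> (1 <= j)%nat -> (j <= n)%nat ->
     INR (Nat.max i j - Nat.min i j) / (c * INR n) <= Rabs (theta i - theta j) /\
     Rabs (theta i - theta j) <= c * INR (Nat.max i j - Nat.min i j) / INR n).

Definition Gap (theta : nat -> R) (K i : nat) : R :=
  if Nat.leb i K then theta i - theta (S K) else theta K - theta i.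

Fixpoint sumR (f : nat -> R) (n : nat) : R :=
  match n with O => 0 | S m => sumR f m + f (S m) end.

(* largest m' < m with P m', or 0 if none *)
Fixpoint tsearch (P : nat -> bool) (m : nat) : nat :=
  match m with O => O | S m' => if P m' then m' else tsearch P m' end.

Definition Rleb (x y : R) : bool := if Rle_dec x y then true else false.

Definition t_of (theta : nat -> R) (eps : R) (K : nat) : nat :=
  tsearch (fun t => Rleb (Gap theta K (K - t) * INR t) (INR K * eps) &&
                    Rleb (Gap theta K (K + t + 1) * INR t) (INR K * eps)) K.

Definition Psi (theta : nat -> R) (K t : nat) : R :=
  Rmin (Gap theta K (K - t)) (Gap theta K (K + t + 1)).

Definition Psi_eps (theta : nat -> R) (K t : nat) (eps : R) : R :=
  Rmax eps (Psi theta K t).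

Definition H (theta : nat -> R) (n K t : nat) (eps : R) : R :=
  sumR (fun i => Rmin (/ (Gap theta K i ^ 2)) (/ (Psi_eps theta K t eps ^ 2))) n.

(* Main.v *)
Require Import Defs.
From Stdlib Require Import Reals Lra Lia ZArith Bool.
Open Scope R_scope.

Lemma sumR_ext f g n : (forall i, (1 <= i <= n)%nat -> f i = g i) -> sumR f n = sumR g n.
Proof.
  induction n; intros Hfg; simpl; [reflexivity|].
  rewrite IHn by (intros; apply Hfg; lia). rewrite Hfg by lia. reflexivity.
Qed.

Lemma sumR_le f g n : (forall i, (1 <= i <= n)%nat -> f i <= g i) -> sumR f n <= sumR g n.
Proof.
  induction n; intros Hfg; simpl; [lra|].
  assert (sumR f n <= sumR g n) by (apply IHn; intros; apply Hfg; lia).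
  assert (f (S n) <= g (S n)) by (apply Hfg; lia). lra.
Qed.

Lemma sumR_shift f m : sumR f (S m) = f 1%nat + sumR (fun d => f (S d)) m.
Proof.
  induction m. simpl. lra.
  change (sumR f (S (S m))) with (sumR f (S m) + f (S (S m))).
  rewrite IHm. simpl. lra.
Qed.

Lemma sumR_rev m : forall f, sumR (fun d => f (m + 1 - d)%nat) m = sumR f m.
Proof.
  induction m; intros f. reflexivity.
  change (sumR (fun d => f (S m + 1 - d)%nat) (S m)) with
    (sumR (fun d => f (S m + 1 - d)%nat) m + f (S m + 1 - S m)%nat).
  rewrite (sumR_shift f).
  replace (S m + 1 - S m)%nat with 1%nat by lia.
  rewrite <- (IHm (fun d => f (S d))).
  rewrite (sumR_ext (fun d => f (S m + 1 - d)%nat) (fun d => f (S (m + 1 - d)))) by (intros; f_equal; lia).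
  lra.
Qed.

Lemma sumR_split f K j : sumR f (K + j) = sumR f K + sumR (fun d => f (K + d)%nat) j.
Proof.
  induction j. rewrite Nat.add_0_r. simpl. lra.
  rewrite Nat.add_succ_r. simpl. rewrite IHj. rewrite Nat.add_succ_r. lra.
Qed.

Lemma sumR_two f K n : (K <= n)%nat ->
  sumR f n = sumR (fun d => f (K + 1 - d)%nat) K + sumR (fun d => f (K + d)%nat) (n - K).
Proof. intros. rewrite (sumR_rev K f). rewrite <- sumR_split. f_equal. lia. Qed.

Lemma tsearch_lt P m : (0 < m)%nat -> (tsearch P m < m)%nat.
Proof.
  induction m; intros Hm; [lia|]. simpl. destruct (P m). lia.
  destruct m. simpl. lia. specialize (IHm ltac:(lia)). lia.
Qed.

Lemma tsearch_max P m j : (tsearch P m < j < m)%nat -> P j = false.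
Proof.
  induction m; intros Hj; [lia|]. simpl in Hj. destruct (P m) eqn:E. lia.
  destruct (Nat.eq_dec j m). subst; auto. apply IHm; lia.
Qed.

Lemma Rleb_false x y : Rleb x y = false -> y < x.
Proof. unfold Rleb. destruct (Rle_dec x y); [discriminate|]. intros; apply Rnot_le_lt; auto. Qed.

Lemma gapL c n th K d : spread c n th -> 0 < c -> (1 <= d <= K)%nat -> (K + 1 <= n)%nat ->
  INR d / (c * INR n) <= Gap th K (K + 1 - d) /\ Gap th K (K + 1 - d) <= c * INR d / INR n.
Proof.
  intros [Hm [_ Hs]] Hc Hd HK.
  unfold Gap. replace (Nat.leb (K+1-d) K) with true by (symmetry; apply Nat.leb_le; lia).
  destruct (Hs (K+1-d)%nat (K+1)%nat ltac:(lia) ltac:(lia) ltac:(lia) ltac:(lia)) as [h1 h2].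
  replace (Nat.max (K+1-d) (K+1) - Nat.min (K+1-d) (K+1))%nat with d in h1, h2 by lia.
  assert (th (K+1)%nat <= th (K+1-d)%nat) by (apply Hm; lia).
  rewrite Rabs_pos_eq in h1, h2 by lra.
  replace (S K) with (K+1)%nat by lia. split; assumption.
Qed.

Lemma gapR c n th K d : spread c n th -> 0 < c -> (1 <= d)%nat -> (1 <= K)%nat -> (K + d <= n)%nat ->
  INR d / (c * INR n) <= Gap th K (K + d) /\ Gap th K (K + d) <= c * INR d / INR n.
Proof.
  intros [Hm [_ Hs]] Hc Hd HK Hn.
  unfold Gap. replace (Nat.leb (K+d) K) with false by (symmetry; apply Nat.leb_gt; lia).
  destruct (Hs K (K+d)%nat ltac:(lia) ltac:(lia) ltac:(lia) ltac:(lia)) as [h1 h2].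
  replace (Nat.max K (K+d) - Nat.min K (K+d))%nat with d in h1, h2 by lia.
  assert (th (K+d)%nat <= th K) by (apply Hm; lia).
  rewrite Rabs_pos_eq in h1, h2 by lra. split; assumption.
Qed.

Lemma S_lin x M m : 0 <= M -> sumR (fun d => Rmin (x^2 / INR d ^ 2) M) m <= INR m * M.
Proof.
  induction m; intros HM; cbn [sumR]. simpl; lra.
  rewrite S_INR. specialize (IHm HM).
  assert (Rmin (x ^ 2 / (INR m + 1) ^ 2) M <= M) by apply Rmin_r.
  rewrite Rmult_plus_distr_r, Rmult_1_l. lra.
Qed.

Lemma tail_bound x k j : (1 <= k)%nat ->
  sumR (fun d => x^2 / INR (k + d) ^ 2) j <= x^2 * (/ INR k - / INR (k + j)).
Proof.
  intros Hk. induction j.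
  - rewrite Nat.add_0_r. simpl. lra.
  - cbn [sumR].
    assert (Ha: 1 <= INR (k + j)) by (apply (le_INR 1); lia).
    replace (INR (k + S j)) with (INR (k+j) + 1) by (rewrite Nat.add_succ_r, S_INR; reflexivity).
    set (a := INR (k+j)) in *.
    assert (x^2 / (a+1)^2 <= x^2 * (/a - /(a+1))).
    { replace (x^2 * (/a - /(a+1))) with (x^2 / (a*(a+1))) by (field; lra).
      unfold Rdiv. apply Rmult_le_compat_l. nra. apply Rinv_le_contravar. nra. nra. }
    lra.
Qed.

Lemma S_upper x M k m : 0 <= M -> (1 <= k)%nat ->
  sumR (fun d => Rmin (x^2 / INR d ^ 2) M) m <= INR k * M + x^2 / INR k.
Proof.
  intros HM Hk.
  assert (Hk' : 1 <= INR k) by (apply (le_INR 1); lia).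
  assert (0 <= x^2 / INR k) by (apply Rmult_le_pos; [nra| left; apply Rinv_0_lt_compat; lra]).
  destruct (le_lt_dec m k).
  - eapply Rle_trans. apply S_lin; auto. assert (INR m <= INR k) by (apply le_INR; auto). nra.
  - replace m with (k + (m - k))%nat by lia. rewrite sumR_split.
    eapply Rle_trans. apply Rplus_le_compat. apply S_lin; auto.
    apply sumR_le with (g := fun d => x^2 / INR (k + d) ^ 2). intros; apply Rmin_l.
    eapply Rle_trans. apply Rplus_le_compat_l. apply tail_bound; auto.
    assert (0 < INR (k + (m-k))) by (apply lt_0_INR; lia).
    assert (0 <= x^2 * / INR (k + (m - k))) by (apply Rmult_le_pos; [nra| left; apply Rinv_0_lt_compat; lra]).
    unfold Rdiv. lra.
Qed.

Lemma S_lower z e m : 0 < z -> z <= e ->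
  Rmin (INR m) (e / (2 * z)) * / e ^ 2 <= sumR (fun d => Rmin (/ (z * INR d) ^ 2) (/ e ^ 2)) m.
Proof.
  intros Hz Hze. assert (He: 0 < e) by lra.
  assert (Hie : 0 < / e^2) by (apply Rinv_0_lt_compat; nra).
  set (L := e / (2*z)).
  assert (HL : 2 * z * L = e) by (unfold L; field; lra).
  induction m.
  - change (INR 0) with 0. cbn [sumR]. assert (Rmin 0 L <= 0) by apply Rmin_l. nra.
  - cbn [sumR]. rewrite S_INR.
    assert (Hm0 := pos_INR m).
    destruct (Rle_dec L (INR m)) as [h|h].
    + rewrite Rmin_right in IHm by lra. rewrite Rmin_right by lra.
      assert (0 <= Rmin (/ (z * (INR m + 1)) ^ 2) (/ e ^ 2)).
      { apply Rmin_glb; [|lra]. left. apply Rinv_0_lt_compat. apply pow_lt. nra. }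
      lra.
    + apply Rnot_le_lt in h.
      rewrite Rmin_left in IHm by lra.
      assert (hz : z * (INR m + 1) <= e).
      { destruct (Nat.eq_dec m 0). subst m. change (INR 0) with 0. lra.
        assert (1 <= INR m) by (apply (le_INR 1); lia). nra. }
      rewrite (Rmin_right (/ (z * (INR m + 1)) ^ 2)).
      2: { apply Rinv_le_contravar. apply pow_lt; nra. apply pow_incr; nra. }
      assert (Rmin (INR m + 1) L <= INR m + 1) by apply Rmin_l.
      nra.
Qed.

Lemma Rmin_mono a b a' b' : a <= a' -> b <= b' -> Rmin a b <= Rmin a' b'.
Proof. intros. unfold Rmin. destruct (Rle_dec a b); destruct (Rle_dec a' b'); lra. Qed.

Lemma inv_gap x d g : 0 < x -> 1 <= d -> d / x <= g -> / g^2 <= x^2 / d^2.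
Proof.
  intros. assert (0 < d/x) by (apply Rdiv_lt_0_compat; lra).
  replace (x^2/d^2) with (/ (d/x)^2) by (field; lra).
  apply Rinv_le_contravar. apply pow_lt; auto. apply pow_incr; lra.
Qed.

Lemma key_arith g N e c T : 0 < g -> g <= 1 -> 0 < c -> 1 <= T -> 0 < N ->
  g * N * e * N < c * (T + 1) * T -> g^2 * N^2 * e <= 4 * c * T^2.
Proof.
  intros. assert (g * (g*N*e*N) <= g * (c*(T+1)*T)) by (apply Rmult_le_compat_l; lra).
  assert (0 <= c*(T+1)*T) by (apply Rmult_le_pos; [apply Rmult_le_pos|]; lra).
  assert (g*(c*(T+1)*T) <= c*(T+1)*T) by nra.
  assert (c*(T+1)*T <= 4*c*T^2) by nra.
  replace (g^2*N^2*e) with (g*(g*N*e*N)) by ring. lra.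
Qed.

Lemma part1 : (forall c gamma : R, 1 <= c -> 0 < gamma -> gamma <= 1 / 2 ->
     exists C : R,
       forall (n : nat) (theta : nat -> R) (K : nat) (eps : R),
         spread c n theta ->
         INR K = gamma * INR n -> (1 <= K)%nat ->
         4 * c / (gamma * INR n ^ 2) <= eps -> eps <= 1 ->
         H theta n K (t_of theta eps K) eps <= C * INR n / sqrt eps).
Proof.
  intros c gamma Hc Hg Hg2.
  assert (Hc0 : 0 < c) by lra.
  assert (Hb : 0 < gamma^2 / (4 * c^3)) by (apply Rdiv_lt_0_compat; [nra| assert (0 < c^3) by (apply pow_lt; lra); lra]).
  set (r := sqrt (gamma^2 / (4 * c^3))).
  assert (Hr : 0 < r) by (apply sqrt_lt_R0; auto).
  assert (Hr2 : r^2 = gamma^2 / (4 * c^3)) by (unfold r; rewrite <- sqrt_sqrt with (x := gamma^2/(4*c^3)) at 2; [ring|lra]).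
  clearbody r.
  exists (4 * c / r + 1 / (r * r)).
  intros n th K eps Hsp HKg HK1 Heps Heps1.
  assert (HKr : 1 <= INR K) by (apply (le_INR 1); lia).
  assert (HN : 0 < INR n) by nra.
  assert (H2K : (2 * K <= n)%nat).
  { apply INR_le. rewrite mult_INR. rewrite HKg. simpl (INR 2). nra. }
  assert (HeP : 0 < eps).
  { assert (0 < 4*c/(gamma*INR n^2)) by (apply Rdiv_lt_0_compat; [lra|]; apply Rmult_lt_0_compat; [lra| apply pow_lt; lra]). lra. }
  set (s := sqrt eps).
  assert (Hss : eps = s * s) by (unfold s; rewrite sqrt_sqrt; lra).
  assert (Hs0 : 0 < s) by (unfold s; apply sqrt_lt_R0; lra).
  assert (Hs2 : 2 / INR n <= s).
  { assert (h : (2/INR n)^2 <= eps).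
    { replace ((2/INR n)^2) with (4*gamma/(gamma*INR n^2)) by (field; lra).
      eapply Rle_trans; [|exact Heps].
      unfold Rdiv; apply Rmult_le_compat_r; [left; apply Rinv_0_lt_compat; apply Rmult_lt_0_compat; [lra| apply pow_lt; lra] | lra]. }
    unfold s. rewrite <- (sqrt_pow2 (2/INR n)). apply sqrt_le_1_alt; auto.
    left; apply Rdiv_lt_0_compat; lra. }
  clearbody s.
  set (t := t_of th eps K).
  assert (Ht : (t < K)%nat) by (unfold t, t_of; apply tsearch_lt; lia).
  set (T := INR t + 1).
  assert (ET : T = INR (S t)) by (unfold T; rewrite S_INR; reflexivity).
  clearbody T.
  assert (HT1 : 1 <= T) by (rewrite ET; apply (le_INR 1); lia).
  assert (HPsi : T / (c * INR n) <= Psi th K t).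
  { unfold Psi. replace (K - t)%nat with (K + 1 - S t)%nat by lia.
    replace (K + t + 1)%nat with (K + S t)%nat by lia.
    destruct (gapL c n th K (S t) Hsp Hc0 ltac:(lia) ltac:(lia)) as [g1 _].
    destruct (gapR c n th K (S t) Hsp Hc0 ltac:(lia) ltac:(lia) ltac:(lia)) as [g2 _].
    rewrite <- ET in g1, g2. apply Rmin_glb; assumption. }
  assert (Hkey : gamma^2 * INR n^2 * eps <= 4 * c * T^2).
  { destruct (lt_dec (S t) K) as [Hlt|Hge].
    - assert (HH : (t < S t < K)%nat) by lia.
      pose proof (tsearch_max (fun t0 => Rleb (Gap th K (K - t0) * INR t0) (INR K * eps) &&
                    Rleb (Gap th K (K + t0 + 1) * INR t0) (INR K * eps))%bool K (S t) HH) as Hf.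
      cbv beta in Hf. apply andb_false_iff in Hf.
      rewrite <- ET in Hf.
      apply key_arith; try lra.
      destruct Hf as [Hf|Hf]; apply Rleb_false in Hf.
      + replace (K - S t)%nat with (K + 1 - S (S t))%nat in Hf by lia.
        destruct (gapL c n th K (S (S t)) Hsp Hc0 ltac:(lia) ltac:(lia)) as [_ g].
        rewrite S_INR, <- ET in g.
        set (G := Gap th K (K + 1 - S (S t))) in *.
        assert (G * T <= c * (T+1) / INR n * T) by (apply Rmult_le_compat_r; lra).
        assert (Eq1 : c * (T+1) / INR n * T * INR n = c * (T+1) * T) by (field; lra).
        rewrite HKg in Hf.
        assert (gamma * INR n * eps * INR n < c * (T+1) / INR n * T * INR n) by (apply Rmult_lt_compat_r; lra).
        lra.
      + replace (K + S t + 1)%nat with (K + S (S t))%nat in Hf by lia.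
        destruct (gapR c n th K (S (S t)) Hsp Hc0 ltac:(lia) ltac:(lia) ltac:(lia)) as [_ g].
        rewrite S_INR, <- ET in g.
        set (G := Gap th K (K + S (S t))) in *.
        assert (G * T <= c * (T+1) / INR n * T) by (apply Rmult_le_compat_r; lra).
        assert (Eq1 : c * (T+1) / INR n * T * INR n = c * (T+1) * T) by (field; lra).
        rewrite HKg in Hf.
        assert (gamma * INR n * eps * INR n < c * (T+1) / INR n * T * INR n) by (apply Rmult_lt_compat_r; lra).
        lra.
    - assert (H0 : T = INR K) by (rewrite ET; f_equal; lia).
      rewrite H0, HKg.
      assert (0 <= gamma^2 * INR n^2) by nra.
      replace (4 * c * (gamma * INR n)^2) with (4 * c * (gamma^2 * INR n^2)) by ring.
      nra. }
  set (P := Psi_eps th K t eps).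
  assert (HPP : Psi th K t <= P) by (unfold P, Psi_eps; apply Rmax_r).
  assert (HT0 : 0 < T / (c * INR n)) by (apply Rdiv_lt_0_compat; nra).
  assert (Hbe : r^2 * eps <= (T / (c * INR n))^2).
  { rewrite Hr2.
    replace (gamma ^ 2 / (4 * c ^ 3) * eps) with ((gamma^2 * INR n^2 * eps) / (4 * c^3 * INR n^2)) by (field; lra).
    replace ((T / (c * INR n))^2) with ((4 * c * T^2) / (4 * c^3 * INR n^2)) by (field; lra).
    unfold Rdiv; apply Rmult_le_compat_r; [|exact Hkey].
    left; apply Rinv_0_lt_compat. assert (0 < c^3) by (apply pow_lt; lra). assert (0 < INR n ^2) by (apply pow_lt; lra). nra. }
  set (M := / (r^2 * eps)).
  assert (Hre : 0 < r^2 * eps) by (apply Rmult_lt_0_compat; [apply pow_lt|]; lra).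
  assert (HM0 : 0 <= M) by (unfold M; left; apply Rinv_0_lt_compat; lra).
  assert (HPM : / P^2 <= M).
  { unfold M. apply Rinv_le_contravar; auto. eapply Rle_trans; [exact Hbe|]. apply pow_incr. lra. }
  set (x := c * INR n).
  assert (Hx : 0 < x) by (unfold x; nra).
  set (y := x * r * s).
  assert (Hy : 0 < y) by (unfold y; apply Rmult_lt_0_compat; [apply Rmult_lt_0_compat|]; lra).
  destruct (archimed y) as [a1 a2].
  assert (Hup : (0 < up y)%Z) by (apply lt_0_IZR; lra).
  set (k := Z.to_nat (up y)).
  assert (Ek : INR k = IZR (up y)) by (unfold k; rewrite INR_IZR_INZ, Z2Nat.id; [reflexivity| lia]).
  assert (Hk1 : (1 <= k)%nat) by (unfold k; lia).
  assert (Hsum : H th n K t eps <= 2 * (INR k * M + x^2 / INR k)).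
  { unfold H. fold P. rewrite (sumR_two _ K n) by lia.
    assert (U1 := S_upper x M k K HM0 Hk1).
    assert (U2 := S_upper x M k (n - K) HM0 Hk1).
    assert (A1 : sumR (fun d => Rmin (/ (Gap th K (K + 1 - d)%nat ^ 2)) (/ (P ^ 2))) K <=
                 sumR (fun d => Rmin (x^2 / INR d ^ 2) M) K).
    { apply sumR_le. intros d Hd.
      destruct (gapL c n th K d Hsp Hc0 ltac:(lia) ltac:(lia)) as [g1 g2].
      apply Rmin_mono; auto. apply inv_gap; auto. apply (le_INR 1); lia. }
    assert (A2 : sumR (fun d => Rmin (/ (Gap th K (K + d)%nat ^ 2)) (/ (P ^ 2))) (n - K) <=
                 sumR (fun d => Rmin (x^2 / INR d ^ 2) M) (n - K)).
    { apply sumR_le. intros d Hd.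
      destruct (gapR c n th K d Hsp Hc0 ltac:(lia) ltac:(lia) ltac:(lia)) as [g1 g2].
      apply Rmin_mono; auto. apply inv_gap; auto. apply (le_INR 1); lia. }
    lra. }
  assert (B1 : INR k * M <= (y + 1) * M) by (apply Rmult_le_compat_r; lra).
  assert (B2 : x^2 / INR k <= x^2 / y).
  { unfold Rdiv; apply Rmult_le_compat_l; [nra|]. apply Rinv_le_contravar; lra. }
  assert (Hdiff : (4 * c / r + 1 / (r * r)) * INR n / s - 2 * ((y + 1) * M + x^2 / y)
                  = (INR n * s - 2) / (r^2 * s^2)).
  { unfold M, y, x. rewrite Hss. field. repeat split; lra. }
  assert (HNs : 2 <= INR n * s).
  { replace 2 with (2 / INR n * INR n) by (field; lra). nra. }
  assert (0 <= (INR n * s - 2) / (r^2 * s^2)).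
  { apply Rmult_le_pos; [lra|]. left; apply Rinv_0_lt_compat. apply Rmult_lt_0_compat; apply pow_lt; lra. }
  lra.
Qed.

Lemma part2 : (forall (c : R) (n : nat) (theta : nat -> R) (K : nat) (eps : R),
     1 <= c -> spread c n theta -> (2 <= n)%nat ->
     (1 <= K)%nat -> (K <= n - 1)%nat ->
     c / INR n <= eps -> eps <= 1 ->
     H theta n K 0 eps = sumR (fun i => Rmin (/ (Gap theta K i ^ 2)) (/ (eps ^ 2))) n /\
     INR n / (4 * c * eps) <= H theta n K 0 eps).
Proof.
  intros c n th K eps Hc Hsp Hn HK1 HKn Heps Heps1.
  assert (HN : 0 < INR n) by (apply lt_0_INR; lia).
  assert (Hc0 : 0 < c) by lra.
  set (z := c / INR n) in *.
  assert (Ez : z = c / INR n) by reflexivity. clearbody z.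
  assert (Hz : 0 < z) by (rewrite Ez; apply Rdiv_lt_0_compat; lra).
  assert (He : 0 < eps) by lra.
  assert (Hpe : Psi_eps th K 0 eps = eps).
  { unfold Psi_eps, Psi. replace (K - 0)%nat with (K + 1 - 1)%nat by lia.
    replace (K + 0 + 1)%nat with (K + 1)%nat by lia.
    destruct (gapL c n th K 1 Hsp Hc0 ltac:(lia) ltac:(lia)) as [_ h1].
    replace (c * INR 1 / INR n) with z in h1 by (rewrite Ez; simpl; field; lra).
    apply Rmax_left. eapply Rle_trans. apply Rmin_l. lra. }
  assert (Heq : H th n K 0 eps = sumR (fun i => Rmin (/ (Gap th K i ^ 2)) (/ (eps ^ 2))) n).
  { unfold H. rewrite Hpe. reflexivity. }
  split; [exact Heq|]. rewrite Heq.
  rewrite (sumR_two _ K n) by lia.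
  assert (HL := S_lower z eps K Hz Heps).
  assert (HR := S_lower z eps (n-K) Hz Heps).
  assert (HA : forall d g, (1 <= d)%nat -> INR d / (c * INR n) <= g -> g <= c * INR d / INR n ->
     Rmin (/(z*INR d)^2) (/eps^2) <= Rmin (/ g^2) (/eps^2)).
  { intros d g Hd g1 g2. apply Rmin_mono; [|lra].
    assert (1 <= INR d) by (apply (le_INR 1); lia).
    assert (0 < INR d / (c * INR n)) by (apply Rdiv_lt_0_compat; nra).
    replace (c * INR d / INR n) with (z * INR d) in g2 by (rewrite Ez; field; lra).
    apply Rinv_le_contravar. apply pow_lt; lra. apply pow_incr; lra. }
  assert (S1 : sumR (fun d => Rmin (/(z*INR d)^2) (/eps^2)) K <=
     sumR (fun d => Rmin (/ (Gap th K (K + 1 - d)%nat ^ 2)) (/ (eps ^ 2))) K).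
  { apply sumR_le. intros d Hd.
    destruct (gapL c n th K d Hsp Hc0 ltac:(lia) ltac:(lia)) as [g1 g2].
    apply HA; auto; lia. }
  assert (S2 : sumR (fun d => Rmin (/(z*INR d)^2) (/eps^2)) (n - K) <=
     sumR (fun d => Rmin (/ (Gap th K (K + d)%nat ^ 2)) (/ (eps ^ 2))) (n - K)).
  { apply sumR_le. intros d Hd.
    destruct (gapR c n th K d Hsp Hc0 ltac:(lia) ltac:(lia) ltac:(lia)) as [g1 g2].
    apply HA; auto; lia. }
  set (L := eps / (2 * z)) in *.
  assert (EL : L = eps / (2 * z)) by reflexivity. clearbody L.
  assert (HLn : L <= INR n) by (rewrite EL, Ez; apply Rle_trans with (eps * INR n / (2*c)); [right; field; lra| ];
     unfold Rdiv; apply Rle_trans with (1 * INR n * / (2*c)); [apply Rmult_le_compat_r; [left; apply Rinv_0_lt_compat; lra| nra]|];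
     rewrite <- (Rmult_1_r (INR n)) at 2; rewrite Rmult_1_l; apply Rmult_le_compat_l; [lra|];
     rewrite <- Rinv_1; apply Rinv_le_contravar; lra).
  assert (HL0 : 0 < L) by (rewrite EL; apply Rdiv_lt_0_compat; lra).
  rewrite minus_INR in HR by lia.
  assert (HK0 := pos_INR K).
  assert (Hm : L <= Rmin (INR K) L + Rmin (INR n - INR K) L).
  { assert (INR K <= INR n) by (apply le_INR; lia). unfold Rmin. destruct (Rle_dec (INR K) L); destruct (Rle_dec (INR n - INR K) L); lra. }
  assert (Hie : 0 < / eps^2) by (apply Rinv_0_lt_compat; nra).
  assert (Hle : L * /eps^2 <= (Rmin (INR K) L + Rmin (INR n - INR K) L) * /eps^2)
    by (apply Rmult_le_compat_r; lra).
  rewrite Rmult_plus_distr_r in Hle.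
  assert (L * / eps^2 = INR n / (2*c*eps)) by (rewrite EL, Ez; field; lra).
  assert (INR n / (4*c*eps) <= INR n / (2*c*eps)).
  { unfold Rdiv; apply Rmult_le_compat_l; [lra|]. apply Rinv_le_contravar; nra. }
  lra.
Qed.

Theorem lemma1 :
  (forall c gamma : R, 1 <= c -> 0 < gamma -> gamma <= 1 / 2 ->
     exists C : R,
       forall (n : nat) (theta : nat -> R) (K : nat) (eps : R),
         spread c n theta ->
         INR K = gamma * INR n -> (1 <= K)%nat ->
         4 * c / (gamma * INR n ^ 2) <= eps -> eps <= 1 ->
         H theta n K (t_of theta eps K) eps <= C * INR n / sqrt eps) /\
  (forall (c : R) (n : nat) (theta : nat -> R) (K : nat) (eps : R),
     1 <= c -> spread c n theta -> (2 <= n)%nat ->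
     (1 <= K)%nat -> (K <= n - 1)%nat ->
     c / INR n <= eps -> eps <= 1 ->
     H theta n K 0 eps = sumR (fun i => Rmin (/ (Gap theta K i ^ 2)) (/ (eps ^ 2))) n /\
     INR n / (4 * c * eps) <= H theta n K 0 eps).
Proof. split; [exact part1 | exact part2]. Qed.
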